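(* The point $p=(v_{0,0},v_{1,0},v_{2,0},\ldots)$ is a fixed point of $T$, and it is the only periodic point of $(X,T)$.
   Context: Paths and cycles: a graph is $G=(V,E)$ with $V$ finite and $E\subset V\times V$. A path is a finite sequence of vertices $(u_0,\dots,u_L)$ with $(u_j,u_{j+1})\in E$; its length is $|\cdot|=L$; a cycle is a path with $u_0=u_L$. For paths where one ends where the next starts, $+$ denotes concatenation and $a\,c$ means the cycle $c$ traversed $a$ times. Construction: $G_0=(V_0,E_0)$ with $V_0=\{v_{0,0}\}$, $E_0=\{e_{0,0}\}$, $e_{0,0}=(v_{0,0},v_{0,0})$. For $n\geq1$, $G_n=(V_n,E_n)$ consists of a vertex $v_{n,0}$, the loop $e_{n,0}=(v_{n,0},v_{n,0})$, and $n$ cycles $c_{n,1},\dots,c_{n,n}$, each starting and ending at $v_{n,0}$, whose vertices other than $v_{n,0}$ are pairwise distinct (within each cycle and across cycles); $V_n$ is the set of all these vertices and $E_n$ consists of $e_{n,0}$ and the edges of the cycles. The maps $\varphi_n\colon V_{n+1}\to V_n$ and the lengths of the cycles $c_{n+1,i}$ are defined together: $\varphi_n(v_{n+1,0})=v_{n,0}$, and for each $i$ a path $P_{n,i}$ in $G_n$ from $v_{n,0}$ to $v_{n,0}$ is given; $c_{n+1,i}$ has length $|P_{n,i}|$ and $\varphi_n$ maps its $j$-th vertex to the $j$-th vertex of $P_{n,i}$ (written $\varphi_n(c_{n+1,i})=P_{n,i}$). The paths are: $P_{0,1}=10\,e_{0,0}$; for $n\geq1$: $P_{n,i}=e_{n,0}+2c_{n,i}+2c_{n,i+1}+\dots+2c_{n,n}+e_{n,0}$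 for $2\leq i\leq n$; $P_{n,n+1}=(n+2)^2\big(\sum_{i=1}^n|c_{n,i}|\big)\,e_{n,0}$; and $P_{n,1}=(1\,e_{n,0}+2c_{n,1})+(2\,e_{n,0}+2c_{n,1})+\dots+(k_n\,e_{n,0}+2c_{n,1})+e_{n,0}+2c_{n,2}+\dots+2c_{n,n}+e_{n,0}$, where $k_n=2\big(1+\sum_{i=1}^n|c_{n,i}|\big)$. Let $X=\{x\in\prod_{n\geq0}V_n:\varphi_n(x_{n+1})=x_n\ \forall n\}$ with metric $d(x,y)=2^{-\min\{i:x_i\neq y_i\}}$ ($d(x,x)=0$); $X$ is a compact zero-dimensional metric space, and $T\colon X\to X$ defined by $T(x)=y$ iff $(x_n,y_n)\in E_n$ for all $n$ is a well-defined homeomorphism. Write $x_n$ for the $n$-th coordinate of $x$. *)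

(* Defs.v *)
From mathcomp Require Import all_boot.
Set Implicit Arguments. Unset Strict Implicit. Unset Printing Implicit Defensive.

(* Vertices of G_n are encoded as pairs of naturals:
   (0,0)  = v_{n,0};
   (i,j)  = j-th vertex of the cycle c_{n,i}, for 1 <= i <= n, 1 <= j < |c_{n,i}|.
   A path (u_0,...,u_L) is encoded as the vertex list [:: u_0; ...; u_L];
   its length is size - 1. *)
Definition vtx := (nat * nat)%type.
Definition base : vtx := (0, 0).

(* concatenation of paths p + q (q starts where p ends) *)
Definition pcat (p q : seq vtx) : seq vtx := p ++ behead q.
Fixpoint rep (a : nat) (c : seq vtx) : seq vtx :=
  if a is a'.+1 then pcat c (rep a' c) else [:: base].
Definition loop : seq vtx := [:: base; base].
(* the cycle c_{n,i}, given the list ls of cycle lengths [|c_{n,1}|;...;|c_{n,n}|] *)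
Definition cyc (ls : seq nat) (i : nat) : seq vtx :=
  base :: [seq (i, j) | j <- iota 1 (nth 0 ls i.-1).-1] ++ [:: base].
Definition cycsum (ls : seq nat) (i n : nat) : seq vtx :=
  foldr (fun k p => pcat (rep 2 (cyc ls k)) p) [:: base] (iota i (n.+1 - i)).

Definition Ppath (n : nat) (ls : seq nat) (i : nat) : seq vtx :=
  if n == 0 then rep 10 loop
  else if i == 1 then
    let kn := 2 * (1 + sumn ls) in
    pcat (foldr (fun a p => pcat (pcat (rep a loop) (rep 2 (cyc ls 1))) p)
                [:: base] (iota 1 kn))
         (pcat loop (pcat (cycsum ls 2 n) loop))
  else if i <= n then pcat loop (pcat (cycsum ls i n) loop)
  else rep ((n + 2) ^ 2 * sumn ls) loop.

(* lens n = [:: |c_{n,1}|; ...; |c_{n,n}|] *)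
Fixpoint lens (n : nat) : seq nat :=
  if n is m.+1 then [seq (size (Ppath m (lens m) i)).-1 | i <- iota 1 m.+1]
  else [::].

Definition inV (n : nat) (v : vtx) : bool :=
  (v == base) || [&& 1 <= v.1 <= n & 1 <= v.2 < nth 0 (lens n) v.1.-1].

Definition inE (n : nat) (u w : vtx) : Prop :=
  (u = base /\ w = base) \/
  exists i j, [/\ 1 <= i <= n, j < nth 0 (lens n) i.-1,
                  u = nth base (cyc (lens n) i) j &
                  w = nth base (cyc (lens n) i) j.+1].

Definition phi (n : nat) (v : vtx) : vtx :=
  if v == base then base else nth base (Ppath n (lens n) v.1) v.2.

Definition inX (x : nat -> vtx) : Prop :=
  forall n, inV n (x n) /\ phi n (x n.+1) = x n.

(* the graph of T : T x = y iff (x_n, y_n) in E_n for all n *)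
Definition Trel (x y : nat -> vtx) : Prop := forall n, inE n (x n) (y n).

Definition periodic (x : nat -> vtx) : Prop :=
  inX x /\ exists k, 0 < k /\ exists s : nat -> nat -> vtx,
    [/\ s 0 = x, s k = x &
        forall m, m < k -> inX (s m) /\ Trel (s m) (s m.+1)].

Definition pt : nat -> vtx := fun _ => base.

(* Main.v *)
Require Import Defs.
From mathcomp Require Import all_boot.
From mathcomp Require Import zify.
From Stdlib Require Import FunctionalExtensionality.

Definition L (p : seq vtx) := (size p).-1.

Lemma ne_pcat p q : p != [::] -> pcat p q != [::].
Proof. by case: p. Qed.

Lemma ne_rep a c : c != [::] -> rep a c != [::].
Proof. by case: a => //= a; apply: ne_pcat. Qed.

Lemma L_pcat p q : p != [::] -> q != [::] -> L (pcat p q) = L p + L q.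
Proof. case: p => // x p _; case: q => // y q _. by rewrite /L /pcat /= size_cat. Qed.

Lemma L_rep a c : c != [::] -> L (rep a c) = a * L c.
Proof.
move=> c0; elim: a => [|a IH] /=; first by rewrite mul0n.
by rewrite L_pcat // ?ne_rep // IH mulSn.
Qed.

Lemma L_cyc ls i : L (cyc ls i) = (nth 0 ls i.-1).-1.+1.
Proof. by rewrite /L /cyc /= size_cat size_map size_iota addn1. Qed.

Lemma ne_foldr (T : Type) (f : T -> seq vtx -> seq vtx) s :
  (forall a p, f a p != [::]) -> foldr f [:: base] s != [::].
Proof. by move=> h; case: s => //= a s; apply: h. Qed.

Lemma cycsum_bound ls i n : i <= n -> 2 * L (cyc ls i) <= L (cycsum ls i n).
Proof.
move=> hi; rewrite /cycsum.
have -> : n.+1 - i = (n - i).+1 by lia.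
cbn [iota foldr]; rewrite L_pcat //; last by apply: ne_foldr => a p; apply: ne_pcat; apply: ne_rep.
  rewrite L_rep //; lia.
Qed.

Lemma sumn_nth0 s : nth 0 s 0 <= sumn s.
Proof. case: s => //= a s; lia. Qed.

Lemma Pbound n i : 0 < i <= n.+1 ->
  (forall j, 0 < j <= n -> n <= nth 0 (lens n) j.-1) ->
  n.+1 <= L (Ppath n (lens n) i).
Proof.
move=> /andP[i0 iN] IH. rewrite /Ppath.
case: eqP => [->|/eqP n0]; first by rewrite L_rep.
have hl : (loop != [::]) by [].
have hcs : forall a b, cycsum (lens n) a b != [::].
  by move=> a b; apply: ne_foldr => ? ?; apply: ne_pcat; apply: ne_rep.
case: eqP => [i1|/eqP i1].
  rewrite L_pcat; last first.
  - by apply: ne_pcat.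
  - by apply: ne_foldr => ? ?; apply: ne_pcat; apply: ne_pcat; apply: ne_rep.
  set kn := 2 * _.
  have -> : kn = (kn.-1).+1 by rewrite /kn; lia.
  cbn [iota foldr]; rewrite L_pcat; last first.
  - by apply: ne_foldr => ? ?; apply: ne_pcat; apply: ne_pcat; apply: ne_rep.
  - by apply: ne_pcat; apply: ne_rep.
  rewrite L_pcat; [|by apply: ne_rep|by apply: ne_rep].
  rewrite [L (rep 2 _)]L_rep // L_cyc.
  have := IH 1; rewrite /=; lia.
case: ifP => iln.
  rewrite L_pcat //; last by apply: ne_pcat.
  rewrite L_pcat //.
  have := @cycsum_bound (lens n) i n iln.
  rewrite L_cyc.
  have := IH i; lia.
rewrite L_rep //.
have := IH 1; have := sumn_nth0 (lens n); rewrite /L /=; nia.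
Qed.

Lemma lens_bound n i : 0 < i <= n -> n <= nth 0 (lens n) i.-1.
Proof.
elim: n i => [|n IH] i /andP[i0 iN]; first lia.
rewrite (_ : lens n.+1 = [seq (size (Ppath n (lens n) k)).-1 | k <- iota 1 n.+1]) // (nth_map 0); last by rewrite size_iota; lia.
rewrite nth_iota; last lia.
have -> : 1 + i.-1 = i by lia.
apply: Pbound; first lia.
exact: IH.
Qed.

Definition g (i : nat) (v : vtx) : nat := if v.1 == i then v.2 else 0.

Lemma nth_cyc ls i t : nth base (cyc ls i) t =
  if 0 < t <= (nth 0 ls i.-1).-1 then (i, t) else base.
Proof.
case: t => [|t] //=. rewrite nth_cat size_map size_iota.
case: ltnP => h.
  by rewrite (nth_map 0) ?size_iota // nth_iota // add1n h.
by case: (_ - _) => [|[]].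
Qed.

Lemma gA i n u w : 0 < i -> Defs.inE n u w -> g i w <= (g i u).+1.
Proof.
move=> i0 [[-> ->]|[i' [j' [_ _ -> ->]]]].
  by rewrite /g /=; case: eqP.
rewrite !nth_cyc; set M := (nth 0 _ _).-1.
case h1: (0 < j' <= M); case h2: (0 < j'.+1 <= M); rewrite /g /=;
  repeat case: eqP => /=; lia.
Qed.

Lemma gB i n u w : 0 < i -> 0 < g i u -> Defs.inE n u w ->
  g i w = (g i u).+1 \/ (g i w = 0 /\ nth 0 (lens n) i.-1 <= (g i u).+1).
Proof.
move=> i0 gu [[eu ew]|[i' [j' [_ hj eu ew]]]].
  by move: gu; rewrite eu /g /=; case: eqP.
move: gu; rewrite eu ew !nth_cyc; set M := (nth 0 _ _).-1.
case h1: (0 < j' <= M); last by rewrite /g /=; case: eqP.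
rewrite /g /=; case: eqP => /= [ei _|]; last by [].
subst i'.
case h2: (0 < j'.+1 <= M) => /=; move: h2 => /= h2; rewrite h2 /=.
  by left; rewrite eqxx.
right; case: eqP => /= [e|_]; first lia.
split => //; rewrite /M in h2; lia.
Qed.

Theorem lemma3p2 :
  inX pt /\ Trel pt pt /\ (forall x, periodic x -> x = pt).
Proof.
split; first by move=> n; rewrite /pt /inV eqxx /phi eqxx.
split; first by move=> n; left.
move=> x [Xx [k [k0 [s [s0 sk Hs]]]]].
apply: functional_extensionality => n0.
apply/eqP; apply/negPn/negP => H.
have prop : forall m, x (n0 + m) != base.
  elim => [|m IH]; first by rewrite addn0.
  rewrite addnS; apply: contra IH => /eqP e.
  have [_ <-] := Xx (n0 + m).
  by rewrite e /phi eqxx.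
pose n := n0 + k.+1.
have Hn := prop k.+1.
have [Vn _] := Xx n.
move: Vn; rewrite /inV -/n (negbTE Hn) /= => /andP[/andP[i1 iN] /andP[j1 jL]].
set i := (x n).1 in i1 iN jL *.
set j := (x n).2 in j1 jL *.
have len : n <= nth 0 (lens n) i.-1 by apply: lens_bound; lia.
have inv : forall m, m <= k ->
    g i (s m n) = j + m \/ g i (s m n) + nth 0 (lens n) i.-1 <= m + j.
  elim => [|m IH] hm.
    by left; rewrite s0 addn0 /g eqxx.
  have [_ E] := Hs m hm.
  have E' := E n.
  case: (IH (ltnW hm)) => h.
    have := @gB i n (s m n) (s m.+1 n) _ _ E'.
    case; [lia|lia|move=> h'; left; lia|move=> h'; right; lia].
  have := @gA i n (s m n) (s m.+1 n) _ E'.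
  move=> h'; right; have := h' ltac:(lia); lia.
have := inv k (leqnn k); rewrite sk /g eqxx -/j.
have nk : k < n by rewrite /n; lia.
lia.
Qed.
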